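(* Let $A\in\Theta(n,r)$, $\nu=\mathrm{co}(A)$, and $1\le i\le n-1$. Write $S=S_0(n,r)$. (1) Suppose $\nu_{i+1}\ge1$. Let $s=\min\{x: a_{xi}>0\}$ (with $s=\infty$ if column $i$ is zero) and $t=\min\{x:a_{x,i+1}>0\}$. Then $e_A=ye_{i,\nu}$ for some $y\in S$ if and only if $s\ge t$. (2) Suppose $\nu_i\ge1$. Let $x_0=\max\{x:a_{xi}>0\}$ and $y_0=\max\{x: a_{x,i+1}>0\}$ (with $y_0=-\infty$ if column $i+1$ is zero). Then $e_A=yf_{i,\nu}$ for some $y\in S$ if and only if $x_0\ge y_0$.
   Context: Setup: Fix positive integers $n,r$ and a field $k$. $\Lambda(n,r)$: compositions of $r$ into $n$ nonnegative parts. $\Theta(n,r)$: $n\times n$ nonnegative integer matrices $A=(a_{ij})$ with entry sum $r$, with row/column-sum vectors $\mathrm{ro}(A),\mathrm{co}(A)$. $E_{ij}$ denotes the elementary matrix. The $0$-Schur algebra $S_0(n,r)$ (specialization at $q=0$ of the $q$-Schur algebra, tensored with $k$) has basis $\{e_A:A\in\Theta(n,r)\}$ (orbits of $GL(V)$ on pairs of $n$-step flags in an $r$-dimensional space) with $e_Ae_B=0$ if $\mathrm{co}(A)\ne\mathrm{ro}(B)$, otherwise $e_Ae_B$ is the unique open orbit among pairs $(f,h)$ with $(f,g)\in e_A,(g,h)\in e_B$ for some $g$. For $\nu\in\Lambda(n,r)$: $e_{i,\nu}$ (defined if $\nu_{i+1}\ge1$) is $e_A$ with $\mathrm{co}(A)=\nu$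 whose only nonzero off-diagonal entry is $1$ at $(i,i+1)$; $f_{i,\nu}$ (defined if $\nu_i\ge1$) is $e_A$ with $\mathrm{co}(A)=\nu$ whose only nonzero off-diagonal entry is $1$ at $(i+1,i)$. Right multiplication rules: if $\mathrm{co}(B)_{i+1}>0$ then $e_Bf_{i}=e_{B+E_{p,i}-E_{p,i+1}}$ with $p=\max\{j:b_{j,i+1}>0\}$; if $\mathrm{co}(B)_i>0$ then $e_Be_i=e_{B-E_{p,i}+E_{p,i+1}}$ with $p=\min\{j:b_{ji}>0\}$ (here $e_i,f_i$ are the generators with row vector $\mathrm{co}(B)$). *)

(* Defs.v *)
From HB Require Import structures.
From mathcomp Require Import all_boot all_order all_algebra.
Set Implicit Arguments. Unset Strict Implicit. Unset Printing Implicit Defensive.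
Import GRing.Theory.

(* Theta(n,r): n x n matrices of nonnegative integers with entry sum r.
   Entries are bounded by r, so we store them in 'I_r.+1 (finite type). *)
Definition Theta (n r : nat) :=
  {A : {ffun 'I_n * 'I_n -> 'I_r.+1} | \sum_(x : 'I_n * 'I_n) nat_of_ord (A x) == r}.

(* Entry a_{pq} with 0-based nat indices (0 outside the range). *)
Definition ent n r (A : Theta n r) (p q : nat) : nat :=
  match (insub p : option 'I_n), (insub q : option 'I_n) with
  | Some p', Some q' => nat_of_ord (val A (p', q'))
  | _, _ => 0
  end.

Definition ro n r (A : Theta n r) (p : nat) : nat := \sum_(q < n) ent A p q.
Definition co n r (A : Theta n r) (q : nat) : nat := \sum_(p < n) ent A p q.

Definition offdiag_only n r (G : Theta n r) (p0 q0 : nat) : Prop :=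
  forall p q, p < n -> q < n -> p != q ->
    ent G p q = (if (p == p0) && (q == q0) then 1 else 0).

(* e_{i,nu}, f_{i,nu}: characterized by their column vector nu (0-based i, i+1 < n) *)
Definition is_e_col n r (i : nat) (nu : nat -> nat) (G : Theta n r) : Prop :=
  (forall q, q < n -> co G q = nu q) /\ offdiag_only G i i.+1.
Definition is_f_col n r (i : nat) (nu : nat -> nat) (G : Theta n r) : Prop :=
  (forall q, q < n -> co G q = nu q) /\ offdiag_only G i.+1 i.
(* e_i, f_i characterized by their row vector lam *)
Definition is_e_row n r (i : nat) (lam : nat -> nat) (G : Theta n r) : Prop :=
  (forall p, p < n -> ro G p = lam p) /\ offdiag_only G i i.+1.
Definition is_f_row n r (i : nat) (lam : nat -> nat) (G : Theta n r) : Prop :=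
  (forall p, p < n -> ro G p = lam p) /\ offdiag_only G i.+1 i.

Definition is_min_nz n r (A : Theta n r) (q x : nat) : Prop :=
  [/\ x < n, 0 < ent A x q & forall z, z < x -> ent A z q = 0].
Definition is_max_nz n r (A : Theta n r) (q x : nat) : Prop :=
  [/\ x < n, 0 < ent A x q & forall z, x < z -> z < n -> ent A z q = 0].

(* The defining properties of S_0(n,r) used in the paper:
   {e_A} is a k-basis, e_A e_B = 0 if co(A) <> ro(B), otherwise e_A e_B is a
   basis element, and the right multiplication rules by generators. *)
Definition S0_axioms (k : fieldType) (n r : nat) (S : algType k)
    (e : Theta n r -> S) : Prop :=
      (forall s : S, exists c : Theta n r -> k, s = \sum_(A : Theta n r) c A *: e A)%R /\
      (forall c : Theta n r -> k, (\sum_(A : Theta n r) c A *: e A = 0)%R -> forall A, c A = 0%R) /\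
      (forall A B : Theta n r, ~ (forall j, j < n -> co A j = ro B j) -> (e A * e B = 0)%R) /\
      (forall A B : Theta n r, (forall j, j < n -> co A j = ro B j) ->
        exists C : Theta n r, (e A * e B)%R = e C) /\
      (* rule: e_B f_i = e_{B + E_{p,i} - E_{p,i+1}}, p = max{j : b_{j,i+1} > 0} *)
      (forall (i : nat) (B G C : Theta n r) (p : nat), i.+1 < n ->
        is_f_row i (co B) G -> is_max_nz B i.+1 p ->
        (forall x y, x < n -> y < n ->
           ent C x y = if (x == p) && (y == i) then (ent B x y).+1
                       else if (x == p) && (y == i.+1) then (ent B x y).-1
                       else ent B x y) ->
        (e B * e G)%R = e C) /\
    (* rule: e_B e_i = e_{B - E_{p,i} + E_{p,i+1}}, p = min{j : b_{j,i} > 0} *)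
      (forall (i : nat) (B G C : Theta n r) (p : nat), i.+1 < n ->
        is_e_row i (co B) G -> is_min_nz B i p ->
        (forall x y, x < n -> y < n ->
           ent C x y = if (x == p) && (y == i) then (ent B x y).-1
                       else if (x == p) && (y == i.+1) then (ent B x y).+1
                       else ent B x y) ->
        (e B * e G)%R = e C).

(* Main.v *)
Require Import Defs.
From HB Require Import structures.
From mathcomp Require Import all_boot all_order all_algebra.
From mathcomp Require Import zify.
From Stdlib Require Import Classical.
Import GRing.Theory.
Set Implicit Arguments. Unset Strict Implicit. Unset Printing Implicit Defensive.

Lemma entE n r (A : Theta n r) (p q : 'I_n) : ent A p q = val A (p, q).
Proof. by rewrite /ent !valK. Qed.

Lemma ent_out n r (A : Theta n r) p q : ~~ ((p < n) && (q < n)) -> ent A p q = 0.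
Proof.
rewrite negb_and => /orP [] H; rewrite /ent.
  by rewrite insubF // (negbTE H).
by case: (insub p) => // p'; rewrite insubF // (negbTE H).
Qed.

Lemma sum_if_eq n c a : \sum_(q < n) (if (q : nat) == c then a else 0) = if c < n then a else 0.
Proof.
elim: n => [|n IH]; first by rewrite big_ord0.
rewrite big_ord_recr /= IH.
do 3 case: ifP => ?; lia.
Qed.

Lemma total_sum n r (A : Theta n r) : \sum_(p < n) \sum_(q < n) ent A p q = r.
Proof.
rewrite pair_big /= -{2}(eqP (valP A)).
by apply: eq_bigr => x _; rewrite entE; case: x.
Qed.

Lemma mkTheta n r (F : nat -> nat -> nat) :
  \sum_(p < n) \sum_(q < n) F p q = r ->
  exists C : Theta n r, forall x y, x < n -> y < n -> ent C x y = F x y.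
Proof.
rewrite pair_big /= => HF.
have Hle : forall x : 'I_n * 'I_n, F x.1 x.2 <= r.
  move=> x; rewrite -HF (bigD1 x) //=; exact: leq_addr.
pose f := [ffun x : 'I_n * 'I_n => (inord (F x.1 x.2) : 'I_r.+1)].
have Hs : \sum_(x : 'I_n * 'I_n) nat_of_ord (f x) == r.
  apply/eqP; apply: (etrans _ HF); apply: eq_bigr => x _.
  by rewrite ffunE inordK // ltnS.
exists (exist _ f Hs) => x y Hx Hy.
by rewrite (entE (exist _ f Hs) (Ordinal Hx) (Ordinal Hy)) /= ffunE inordK // ltnS (Hle (Ordinal Hx, Ordinal Hy)).
Qed.

Lemma sum_ind n p (b : bool) : p < n -> \sum_(x < n) (((x : nat) == p) && b : nat) = b.
Proof.
move=> Hp; rewrite -[RHS](_ : (if p < n then (b:nat) else 0) = b); last by rewrite Hp.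
rewrite -sum_if_eq; apply: eq_bigr => x _; by case: eqP.
Qed.

Definition mvF n r (B : Theta n r) (p q1 q2 : nat) (x y : nat) : nat :=
  if (x == p) && (y == q1) then (ent B x y).-1
  else if (x == p) && (y == q2) then (ent B x y).+1 else ent B x y.

Lemma mv_pt n r (B : Theta n r) p q1 q2 : q1 != q2 -> 0 < ent B p q1 ->
  forall x y, mvF B p q1 q2 x y + ((x == p) && (y == q1)) = ent B x y + ((x == p) && (y == q2)).
Proof.
move=> Hq Hpos x y; rewrite /mvF.
case: (x =P p) => [->|Hx] /=; last by rewrite !addn0.
case: (y =P q1) => [->|Hy1] /=.
  by rewrite (negbTE Hq) addn1 addn0 prednK.
case: (y =P q2) => [->|Hy2] /=; by rewrite ?addn0 ?addn1.
Qed.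

Lemma mv_row n r (B : Theta n r) p q1 q2 : p < n -> q1 < n -> q2 < n -> q1 != q2 -> 0 < ent B p q1 ->
  forall x, \sum_(y < n) mvF B p q1 q2 x y = \sum_(y < n) ent B x y.
Proof.
move=> Hp H1 H2 Hq Hpos x.
apply/eqP; rewrite -(eqn_add2r (x == p)).
rewrite -{1}(sum_ind (x == p) H1) -{1}(sum_ind (x == p) H2) -!big_split /=.
apply/eqP; apply: eq_bigr => y _.
by rewrite (andbC (_ == q1)) (andbC (_ == q2)) mv_pt.
Qed.

Lemma mv_exists n r (B : Theta n r) p q1 q2 : p < n -> q1 < n -> q2 < n -> q1 != q2 -> 0 < ent B p q1 ->
  exists C : Theta n r, forall x y, x < n -> y < n -> ent C x y = mvF B p q1 q2 x y.
Proof.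
move=> Hp H1 H2 Hq Hpos; apply: mkTheta.
apply: (etrans _ (total_sum B)); apply: eq_bigr => x _; exact: mv_row.
Qed.

Lemma mv_co n r (B C : Theta n r) p q1 q2 : p < n -> q1 < n -> q2 < n -> q1 != q2 -> 0 < ent B p q1 ->
  (forall x y, x < n -> y < n -> ent C x y = mvF B p q1 q2 x y) ->
  forall q, q < n -> co C q + (q == q1) = co B q + (q == q2).
Proof.
move=> Hp H1 H2 Hq Hpos HC q Hqn.
rewrite /co -{1}(sum_ind (q == q1) Hp) -{1}(sum_ind (q == q2) Hp) -!big_split /=.
apply: eq_bigr => x _; by rewrite HC // mv_pt.
Qed.

Lemma offdiag_rc n r (G : Theta n r) a b : a < n -> b < n -> a != b -> offdiag_only G a b ->
  forall p, p < n -> ro G p + (p == b) = co G p + (p == a).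
Proof.
move=> Ha Hb Hab HG p Hp.
have Hr : ro G p = ent G p p + (p == a).
  rewrite /ro -(sum_ind (p == a) Hb) -{1}(addn0 (ent G p p)).
  rewrite -(_ : (if p < n then ent G p p else 0) = ent G p p); last by rewrite Hp.
  rewrite -sum_if_eq addn0 -big_split /=; apply: eq_bigr => y _.
  case: ((y:nat) =P p) => [Hyp|Hyp].
    rewrite Hyp /=; case: (p =P b) => [Epb|_]; case: (p =P a) => [Epa|_] /=; rewrite ?addn0 ?addn1 //.
    by move: Hab; rewrite -Epa -Epb eqxx.
  rewrite add0n HG //; last by apply/eqP => E; apply: Hyp; rewrite E.
  by rewrite andbC; case: (_ && _).
have Hc : co G p = ent G p p + (p == b).
  rewrite /co -(sum_ind (p == b) Ha) -{1}(addn0 (ent G p p)).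
  rewrite -(_ : (if p < n then ent G p p else 0) = ent G p p); last by rewrite Hp.
  rewrite -sum_if_eq addn0 -big_split /=; apply: eq_bigr => x _.
  case: ((x:nat) =P p) => [Hxp|Hxp].
    rewrite Hxp /=; case: (p =P b) => [Epb|_]; case: (p =P a) => [Epa|_] /=; rewrite ?addn0 ?addn1 //.
    by move: Hab; rewrite -Epa -Epb eqxx.
  rewrite add0n HG //; last by apply/eqP.
rewrite Hr Hc; lia.
Qed.


Lemma col_pos n r (A : Theta n r) q : 0 < co A q -> exists x, x < n /\ 0 < ent A x q.
Proof.
case: (pickP (fun x : 'I_n => 0 < ent A x q)) => [x Hx|H]; first by exists x.
have -> : co A q = 0.
  by rewrite /co big1 // => x _; move: (H x) => /= /negbT; rewrite lt0n negbK => /eqP.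
by [].
Qed.

Lemma ex_min_nz n r (A : Theta n r) q : (exists x, x < n /\ 0 < ent A x q) -> exists s, is_min_nz A q s.
Proof.
move=> [x [Hx Hpos]].
have Ex : exists x, (x < n) && (0 < ent A x q) by exists x; rewrite Hx Hpos.
case: (ex_minnP Ex) => m /andP [Hm Hmp] Hmin.
exists m; split => // z Hz.
apply/eqP; rewrite -leqn0 leqNgt; apply/negP => Hzp.
have := Hmin z; rewrite (ltn_trans Hz Hm) Hzp => /(_ isT); by rewrite leqNgt Hz.
Qed.

Lemma ex_max_nz n r (A : Theta n r) q : (exists x, x < n /\ 0 < ent A x q) -> exists s, is_max_nz A q s.
Proof.
move=> [x [Hx Hpos]].
have Ex : exists x, (x < n) && (0 < ent A x q) by exists x; rewrite Hx Hpos.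
have Hb : forall x, (x < n) && (0 < ent A x q) -> x <= n by move=> y /andP [/ltnW].
case: (ex_maxnP Ex Hb) => m /andP [Hm Hmp] Hmax.
exists m; split => // z Hz Hzn.
apply/eqP; rewrite -leqn0 leqNgt; apply/negP => Hzp.
have := Hmax z; rewrite Hzn Hzp => /(_ isT); by rewrite leqNgt Hz.
Qed.

Lemma min_nz_le n r (A : Theta n r) q s z : is_min_nz A q s -> 0 < ent A z q -> s <= z.
Proof.
case=> _ _ H Hz; rewrite leqNgt; apply/negP => Hzs; by move: Hz; rewrite H.
Qed.

Lemma max_nz_ge n r (A : Theta n r) q s z : is_max_nz A q s -> 0 < ent A z q -> z <= s.
Proof.
case=> _ _ H Hz; rewrite leqNgt; apply/negP => Hzs.
have Hzn : z < n.
  rewrite ltnNge; apply/negP => Hn; move: Hz; rewrite ent_out //.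
  by rewrite negb_and -leqNgt Hn.
by move: Hz; rewrite H.
Qed.

Section Span.
Variables (k : fieldType) (n r : nat) (SA : algType k) (e : Theta n r -> SA).
Local Open Scope ring_scope.

Definition inW (A0 : Theta n r) (v : SA) :=
  exists d : Theta n r -> k, d A0 = 0 /\ v = \sum_(C : Theta n r) d C *: e C.

Lemma sum_delta (A0 : Theta n r) : \sum_(C : Theta n r) (if C == A0 then 1 else 0) *: e C = e A0.
Proof.
rewrite (bigD1 A0) //= eqxx scale1r big1 ?addr0 // => C /negbTE ->; by rewrite scale0r.
Qed.

Lemma inW0 A0 : inW A0 0.
Proof. exists (fun _ => 0); split => //; rewrite big1 // => C _; by rewrite scale0r. Qed.

Lemma inWD A0 u v : inW A0 u -> inW A0 v -> inW A0 (u + v).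
Proof.
move=> [d1 [H1 ->]] [d2 [H2 ->]]; exists (fun C => d1 C + d2 C); split.
  by rewrite H1 H2 addr0.
by rewrite -big_split /=; apply: eq_bigr => C _; rewrite scalerDl.
Qed.

Lemma inWZ A0 a v : inW A0 v -> inW A0 (a *: v).
Proof.
move=> [d [H ->]]; exists (fun C => a * d C); split; first by rewrite H mulr0.
by rewrite scaler_sumr; apply: eq_bigr => C _; rewrite scalerA.
Qed.

Lemma inWe A0 C : C != A0 -> inW A0 (e C).
Proof.
move=> HC; exists (fun D => if D == C then 1 else 0); split; first by rewrite eq_sym (negbTE HC).
by rewrite sum_delta.
Qed.

Lemma notW A0 : (forall c : Theta n r -> k, \sum_(A : Theta n r) c A *: e A = 0 -> forall A, c A = 0) ->
  ~ inW A0 (e A0).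
Proof.
move=> Hind [d [Hd Hv]].
have := Hind (fun C => (if C == A0 then 1 else 0) - d C).
have -> : \sum_(C : Theta n r) ((if C == A0 then 1 else 0) - d C) *: e C = 0.
  under eq_bigr => C _ do rewrite scalerBl.
  by rewrite sumrB sum_delta -Hv subrr.
move=> /(_ erefl A0); rewrite eqxx Hd subr0 => /eqP; by rewrite oner_eq0.
Qed.
End Span.

Theorem mainTheorem13 (k : fieldType) (n r : nat) (SA : algType k)
    (e : Theta n r -> SA) :
  0 < n -> 0 < r -> S0_axioms e ->
  forall (A : Theta n r) (i : nat), i.+1 < n ->
  (1 <= co A i.+1 ->
     forall G : Theta n r, is_e_col i (co A) G ->
       (exists y : SA, e A = (y * e G)%R) <->
       (forall s t, is_min_nz A i s -> is_min_nz A i.+1 t -> t <= s))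
  /\
  (1 <= co A i ->
     forall G : Theta n r, is_f_col i (co A) G ->
       (exists y : SA, e A = (y * e G)%R) <->
       (forall x0 y0, is_max_nz A i x0 -> is_max_nz A i.+1 y0 -> y0 <= x0)).
Proof.
move=> Hn Hr [Hspan [Hind [Hzero [Hprod [Hf He]]]]] A i Hi.
have Hii : i != i.+1 by apply/eqP; lia.
have Hii' : i.+1 != i by apply/eqP; lia.
have Hi0 : i < n by apply: ltnW.
have inWprod : forall G : Theta n r,
   (forall B : Theta n r, (forall j, j < n -> co B j = ro G j) -> inW e A (e B * e G)%R) ->
   forall y : SA, e A = (y * e G)%R -> False.
  move=> G HB y Hy; apply: (notW Hind (A0 := A)); rewrite Hy.
  have [c ->] := Hspan y; rewrite GRing.mulr_suml.
  apply: big_ind; [exact: inW0 | exact: inWD | move=> B _].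
  rewrite -GRing.scalerAl; apply: inWZ.
  case: (classic (forall j, j < n -> co B j = ro G j)) => Hm.
    exact: HB.
  rewrite Hzero //; exact: inW0.
split.
- move=> Hco G [HGc HGo]; split.
  + move=> [y Hy] s t Hs Ht; rewrite leqNgt; apply/negP => Hst.
    apply: (inWprod G _ y Hy) => B Hm.
    have HGi : 0 < co B i.
      rewrite Hm // /ro (bigD1 (Ordinal Hi)) //= HGo // !eqxx /=; lia.
    have [p Hp] := ex_min_nz (col_pos HGi).
    case: (Hp) => Hpn Hpp Hpmin.
    have [C HC] := mv_exists Hpn Hi0 Hi Hii Hpp.
    rewrite (He i B G C p Hi _ Hp); last first.
      - by move=> x y1 Hx Hy1; rewrite HC.
      - by split => // q Hq; rewrite Hm.
    apply: inWe; apply/eqP => ECA; subst C.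
    have Htp : t <= p.
      apply: (min_nz_le Ht); rewrite HC // /mvF eqxx (negbTE Hii') /= eqxx /=; lia.
    have Hps : p <= s.
      rewrite leqNgt; apply/negP => Hsp; case: Hs => Hsn Hspos _.
      by move: Hspos; rewrite HC // /mvF (ltn_eqF Hsp) /= Hpmin.
    lia.
  + move=> Hcond.
    have [t Ht] := ex_min_nz (col_pos Hco); case: (Ht) => Htn Htp Htmin.
    have [B HB] := mv_exists Htn Hi Hi0 Hii' Htp.
    exists (e B); symmetry; apply: (He i B G A t Hi).
    * split => // q Hq.
      have := offdiag_rc Hi0 Hi Hii HGo Hq.
      have := mv_co Htn Hi Hi0 Hii' Htp HB Hq.
      rewrite HGc //; lia.
    * split => //.
        rewrite HB // /mvF eqxx (negbTE Hii) /= eqxx /=; lia.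
      move=> z Hz; have Hzn : z < n by apply: ltn_trans Htn.
      rewrite HB // /mvF (ltn_eqF Hz) /=.
      apply/eqP; rewrite -leqn0 leqNgt; apply/negP => Hzpos.
      have [s Hs] := ex_min_nz (ex_intro _ z (conj Hzn Hzpos)).
      have := Hcond s t Hs Ht; have := min_nz_le Hs Hzpos; lia.
    * move=> x y Hx Hy; rewrite !HB // /mvF.
      case: (x =P t) => [->|Hxt] /=; last by [].
      case: (y =P i) => [->|Hyi] /=.
        by rewrite (negbTE Hii).
      case: (y =P i.+1) => [->|Hyi1] /=; last by [].
      by rewrite prednK.
- move=> Hco G [HGc HGo]; split.
  + move=> [y Hy] x0 y0 Hx0 Hy0; rewrite leqNgt; apply/negP => Hst.
    apply: (inWprod G _ y Hy) => B Hm.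
    have HGi : 0 < co B i.+1.
      rewrite Hm // /ro (bigD1 (Ordinal Hi0)) //= HGo // !eqxx /=; lia.
    have [p Hp] := ex_max_nz (col_pos HGi).
    case: (Hp) => Hpn Hpp Hpmax.
    have [C HC] := mv_exists Hpn Hi Hi0 Hii' Hpp.
    rewrite (Hf i B G C p Hi _ Hp); last first.
      - move=> x y1 Hx Hy1; rewrite HC // /mvF.
        case: (x =P p) => [->|Hxp] /=; last by [].
        case: (y1 =P i) => [->|Hyi] /=; first by rewrite (negbTE Hii).
        by case: (y1 =P i.+1).
      - by split => // q Hq; rewrite Hm.
    apply: inWe; apply/eqP => ECA; subst C.
    have Hpx : p <= x0.
      apply: (max_nz_ge Hx0); rewrite HC // /mvF eqxx (negbTE Hii) /= eqxx /=; lia.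
    have Hyp : y0 <= p.
      rewrite leqNgt; apply/negP => Hpy; case: Hy0 => Hyn Hypos _.
      by move: Hypos; rewrite HC // /mvF (gtn_eqF Hpy) /= Hpmax.
    lia.
  + move=> Hcond.
    have [x0 Hx0] := ex_max_nz (col_pos Hco); case: (Hx0) => Hxn Hxp Hxmax.
    have [B HB] := mv_exists Hxn Hi0 Hi Hii Hxp.
    exists (e B); symmetry; apply: (Hf i B G A x0 Hi).
    * split => // q Hq.
      have := offdiag_rc Hi Hi0 Hii' HGo Hq.
      have := mv_co Hxn Hi0 Hi Hii Hxp HB Hq.
      rewrite HGc //; lia.
    * split => //.
        rewrite HB // /mvF eqxx (negbTE Hii') /= eqxx /=; lia.
      move=> z Hz Hzn.
      rewrite HB // /mvF (gtn_eqF Hz) /=.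
      apply/eqP; rewrite -leqn0 leqNgt; apply/negP => Hzpos.
      have [y0 Hy0] := ex_max_nz (ex_intro _ z (conj Hzn Hzpos)).
      have := Hcond x0 y0 Hx0 Hy0; have := max_nz_ge Hy0 Hzpos; lia.
    * move=> x y Hx Hy; rewrite !HB // /mvF.
      case: (x =P x0) => [->|Hxt] /=; last by [].
      case: (y =P i) => [->|Hyi] /=.
        by rewrite prednK.
      case: (y =P i.+1) => [->|Hyi1] /=; last by [].
      by [].
Qed.
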